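(* Let $\mathcal{S}$ be the STAIR code with inside global parity symbols as defined in the context, so that every parity entry $X_{i_0,j_0}$ (with $(i_0,j_0)\in T$ or $j_0\ge n-m$) is a linear function $X_{i_0,j_0}=\sum c_{i,j}\,X_{i,j}$ of the entries at data positions $(i,j)$. Then $c_{i,j}\neq 0$ only if $i\le i_0$ and $j\le j_0$. Moreover, $c_{i,j}=0$ whenever $j\ne j_0$ and $h(j)=h(j_0)$ (columns spanned by the same tread), and $c_{i,j}=0$ whenever $i\ne i_0$ and $v(i)=v(i_0)$ (rows spanned by the same riser).
   Context: Parameters: integers $n,r,m,m'$ with $1\le m<n$, $1\le m'\le n-m$, and $\mathbf{e}=(e_0,\dots,e_{m'-1})$ with $0<e_0\le\cdots\le e_{m'-1}\le r$; $s=\sum_l e_l$. Field $\mathbb{F}=GF(2^w)$ with $n+m'\le 2^w$, $r+e_{m'-1}\le 2^w$. $\mathcal{C}_{row}$ is a systematic linear MDS $(n+m',n-m)$-code and $\mathcal{C}_{col}$ a systematic linear MDS $(r+e_{m'-1},r)$-code over $\mathbb{F}$ (length, dimension; systematic = codeword is the input symbols followed by parity symbols). Stair positions: $T=\{(i,\,n-m-m'+l): 0\le l\le m'-1,\ r-e_l\le i\le r-1\}$. Data positions: all $(i,j)$ with $j\le n-m-1$ and $(i,j)\notin T$. $\mathcal{S}$ is the set of $r\times n$ arrays $X$ over $\mathbb{F}$ for which there is an $r\times m'$ array $P'$ such that each row $(X_{i,0},\dots,X_{i,n-1},P'_{i,0},\dots,P'_{i,m'-1})$ is a codeword of $\mathcal{C}_{row}$,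 and for each $l$ the first $e_l$ of the $e_{m'-1}$ parity symbols of the $\mathcal{C}_{col}$-encoding of column $(P'_{0,l},\dots,P'_{r-1,l})$ are zero. The data entries determine $X\in\mathcal{S}$ uniquely and linearly. Define the parity height of column $j$: $h(j)=0$ for $j<n-m-m'$, $h(n-m-m'+l)=e_l$ for $0\le l\le m'-1$, and $h(j)=r$ for $j\ge n-m$. Define for row $i$: $v(i)=\#\{j: h(j)\ge r-i\}$, the number of parity positions in row $i$. *)

(* Defs.v *)
From HB Require Import structures.
From mathcomp Require Import all_boot all_order all_algebra all_field.
Set Implicit Arguments. Unset Strict Implicit. Unset Printing Implicit Defensive.
Import GRing.Theory.
Local Open Scope ring_scope.

(* A systematic linear (K+R, K)-code over F is given by the parity part A of its
   systematic generator matrix [I_K | A]: the input u is encoded as the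
   codeword (u, u A) of length K+R. *)
Definition sys_enc (F : fieldType) (K R : nat) (A : 'M[F]_(K, R))
  (u : 'rV[F]_K) : 'rV[F]_(K + R) := row_mx u (u *m A).

Definition wt (F : fieldType) (N : nat) (c : 'rV[F]_N) : nat :=
  #|[set j : 'I_N | c 0%R j != 0%R]|.

(* MDS: minimum distance = length - dimension + 1 = R + 1, i.e. every nonzero
   codeword (linear code) has weight at least R + 1. *)
Definition is_sys_MDS (F : fieldType) (K R : nat) (A : 'M[F]_(K, R)) : Prop :=
  forall u : 'rV[F]_K, u != 0%R -> (R < wt (sys_enc A u))%N.

Definition in_T (n r m m' : nat) (e : nat -> nat) (i j : nat) : bool :=
  [&& (n - m - m' <= j)%N, (j < n - m)%N,
      (r - e (j - (n - m - m')) <= i)%N & (i < r)%N].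

Definition data_pos (n r m m' : nat) (e : nat -> nat) (i j : nat) : bool :=
  [&& (i < r)%N, (j < n - m)%N & ~~ in_T n r m m' e i j].

Definition parity_pos (n r m m' : nat) (e : nat -> nat) (i j : nat) : bool :=
  [&& (i < r)%N, (j < n)%N & in_T n r m m' e i j || (n - m <= j)%N].

Definition hgt (n r m m' : nat) (e : nat -> nat) (j : nat) : nat :=
  if (j < n - m - m')%N then 0%N
  else if (j < n - m)%N then e (j - (n - m - m'))%N else r.

(* number of parity positions in row i *)
Definition vcnt (n r m m' : nat) (e : nat -> nat) (i : nat) : nat :=
  #|[set j : 'I_n | (r - i <= hgt n r m m' e j)%N]|.

(* The code S: X (an r x n array) is in S iff there is an r x m' array P' with
   every row (X_i, P'_i) a codeword of C_row (length n+m' = (n-m)+(m+m')), and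
   for each l < m', the first e_l of the e_{m'-1} parity symbols of the C_col
   encoding of column l of P' vanish. *)
Definition in_S (F : fieldType) (n r m m' : nat) (e : nat -> nat)
  (Arow : 'M[F]_(n - m, m + m')) (Acol : 'M[F]_(r, e m'.-1))
  (X : nat -> nat -> F) : Prop :=
  exists P' : nat -> nat -> F,
    (forall i, (i < r)%N -> exists u : 'rV[F]_(n - m),
        \row_(k < (n - m) + (m + m'))
            (if (k < n)%N then X i k else P' i (k - n)%N) = sys_enc Arow u)
    /\ (forall l, (l < m')%N -> forall t : 'I_(e m'.-1), (t < e l)%N ->
          ((\row_(k < r) P' k l) *m Acol) 0%R t = 0%R).
Arguments in_S {F} n r m m' e Arow Acol X.

(* Main.v *)
Require Import Defs.
From HB Require Import structures.
From mathcomp Require Import all_boot all_order all_algebra all_field.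
From mathcomp Require Import zify.
Import GRing.Theory.
Set Implicit Arguments. Unset Strict Implicit. Unset Printing Implicit Defensive.
Local Open Scope ring_scope.

Definition mget (F : fieldType) a b (M : 'M[F]_(a,b)) (p q : nat) : F :=
  match (insub p : option 'I_a), (insub q : option 'I_b) with
  | Some x, Some y => M x y | _, _ => 0 end.

Lemma mgetE (F : fieldType) a b (M : 'M[F]_(a,b)) (x : 'I_a) (y : 'I_b) :
  mget M x y = M x y.
Proof. by rewrite /mget !valK. Qed.

Lemma mget_out (F : fieldType) a b (M : 'M[F]_(a,b)) p q :
  ~~ (p < a)%N || ~~ (q < b)%N -> mget M p q = 0.
Proof.
rewrite /mget; case/orP=> H.
  by case: insubP => [x Hx|] //; rewrite (negbTE H) in Hx.
case: insubP => [x _ _|] //.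
by case: insubP => [y Hy|] //; rewrite (negbTE H) in Hy.
Qed.

Lemma mgetB (F : fieldType) a b (M N : 'M[F]_(a,b)) p q :
  mget (M - N) p q = mget M p q - mget N p q.
Proof.
rewrite /mget; case: insubP => [x _ _|_]; last by rewrite subr0.
by case: insubP => [y _ _|_]; rewrite ?mxE ?subr0.
Qed.

Lemma mds_zero (F : fieldType) (K R : nat) (A : 'M[F]_(K,R)) :
  is_sys_MDS A -> forall (u : 'rV[F]_K) (f : 'I_K -> 'I_(K+R)), injective f ->
  (forall k, (u *m row_mx 1%:M A) 0 (f k) = 0) -> u = 0.
Proof.
move=> HA u f finj Hz; apply/eqP; apply: contraT => nz.
have := HA u nz; rewrite /wt /sys_enc -[u in row_mx u _]mulmx1 -mul_mx_row.
set Z := [set j | _].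
have sub : Z \subset ~: [set f x | x in [set: 'I_K]].
  apply/subsetP => j; rewrite !inE => /negP nzj; apply/imsetP => -[k _ Ej].
  by apply: nzj; rewrite Ej Hz.
have := subset_leq_card sub.
have := cardsCs [set f x | x in [set: 'I_K]].
rewrite card_imset //.
have c1 : #|[set: 'I_K]| = K by rewrite cardsT card_ord.
have c2 : #|'I_(K + R)| = (K + R)%N by rewrite card_ord.
have E0 : (#|~: [set f x | x in [set: 'I_K]]| <= K + R)%N.
  by apply: leq_trans (max_card _) _; rewrite c2.
rewrite c1 => E1 E2 E3; rewrite card_ord in E1; lia.
Qed.

Section Stair.
Variable F : finFieldType.
Variables n r m m' : nat.
Variable e : nat -> nat.
Variable Arow : 'M[F]_(n - m, m + m').
Variable Acol : 'M[F]_(r, e m'.-1).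

Definition Gr : 'M[F]_(n - m, (n - m) + (m + m')) := row_mx 1%:M Arow.
Definition W (D : 'M[F]_(r, n - m)) := D *m Gr.
Definition Xt (D : 'M[F]_(r, n - m)) := Acol^T *m W D.
Definition Y (D : 'M[F]_(r, n - m)) (p q : nat) : F :=
  if (p < r)%N then mget (W D) p q else mget (Xt D) (p - r) q.

Lemma Y_outq D p q : ((n - m) + (m + m') <= q)%N -> Y D p q = 0.
Proof.
move=> Hq; rewrite /Y; case: ifP => _; rewrite mget_out //; apply/orP; right;
  by rewrite -leqNgt.
Qed.

Lemma Y_outp D p q : (r + e m'.-1 <= p)%N -> Y D p q = 0.
Proof.
move=> Hp; rewrite /Y ifF; last by apply/negbTE; rewrite -leqNgt; lia.
rewrite mget_out //; apply/orP; left; rewrite -leqNgt; lia.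
Qed.

Lemma YB D1 D2 p q : Y (D1 - D2) p q = Y D1 p q - Y D2 p q.
Proof. by rewrite /Y /Xt /W !mulmxBl mulmxBr; case: ifP => _; rewrite mgetB. Qed.

Lemma Y_row D p : exists u : 'rV[F]_(n - m),
  forall q : 'I_((n - m) + (m + m')), Y D p q = (u *m Gr) 0 q.
Proof.
case: (ltnP p r) => Hp.
  exists (row (Ordinal Hp) D) => q; rewrite /Y Hp -row_mul mxE.
  exact: (mgetE (W D) (Ordinal Hp) q).
case: (ltnP p (r + e m'.-1)) => Hp2.
  have Ht : (p - r < e m'.-1)%N by lia.
  exists (row (Ordinal Ht) (Acol^T *m D)) => q.
  rewrite /Y ltnNge Hp /= -row_mul -mulmxA mxE.
  exact: (mgetE (Xt D) (Ordinal Ht) q).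
exists 0 => q; rewrite mul0mx mxE; exact: Y_outp.
Qed.

Lemma Y_col D q : exists v : 'rV[F]_r,
  forall p : 'I_(r + e m'.-1), Y D p q = (v *m row_mx 1%:M Acol) 0 p.
Proof.
case: (ltnP q ((n - m) + (m + m'))) => Hq; last first.
  by exists 0 => p; rewrite mul0mx mxE Y_outq.
set y := Ordinal Hq.
exists ((col y (W D))^T) => p; rewrite mul_mx_row mulmx1.
case: (splitP p) => [p' Ep | t Ep].
  have -> : p = lshift _ p' by apply/val_inj.
  rewrite row_mxEl /Y /= ltn_ord (mgetE (W D) p' y) !mxE.
  by apply: eq_bigr => k _; rewrite !mxE.
have -> : p = rshift _ t by apply/val_inj.
rewrite row_mxEr /Y /= ltnNge leq_addr /= addKn.
rewrite (mgetE (Xt D) t y) !mxE; apply: eq_bigr => k _; rewrite !mxE mulrC.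
done.
Qed.

Hypothesis HArow : is_sys_MDS Arow.
Hypothesis HAcol : is_sys_MDS Acol.

Lemma RZ D p (f : nat -> nat) :
  (forall k, (k < n - m)%N -> (f k < (n - m) + (m + m'))%N) ->
  (forall k1 k2, (k1 < n - m)%N -> (k2 < n - m)%N -> f k1 = f k2 -> k1 = k2) ->
  (forall k, (k < n - m)%N -> Y D p (f k) = 0) -> forall q, Y D p q = 0.
Proof.
move=> Hf Hinj Hz.
have [u Hu] := Y_row D p.
pose f' (k : 'I_(n - m)) : 'I_((n - m) + (m + m')) := Ordinal (Hf k (ltn_ord k)).
have f'inj : injective f'.
  by move=> a b /(congr1 val) /= /(Hinj _ _ (ltn_ord a) (ltn_ord b)) H; apply/val_inj.
have u0 : u = 0.
  by apply: (mds_zero HArow f'inj) => k; rewrite -Hu /=; apply: Hz.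
move=> q; case: (ltnP q ((n - m) + (m + m'))) => Hq; last exact: Y_outq.
by have := Hu (Ordinal Hq); rewrite u0 mul0mx mxE.
Qed.

Lemma CZ D q (g : nat -> nat) :
  (forall k, (k < r)%N -> (g k < r + e m'.-1)%N) ->
  (forall k1 k2, (k1 < r)%N -> (k2 < r)%N -> g k1 = g k2 -> k1 = k2) ->
  (forall k, (k < r)%N -> Y D (g k) q = 0) -> forall p, Y D p q = 0.
Proof.
move=> Hf Hinj Hz.
have [u Hu] := Y_col D q.
pose f' (k : 'I_r) : 'I_(r + e m'.-1) := Ordinal (Hf k (ltn_ord k)).
have f'inj : injective f'.
  by move=> a b /(congr1 val) /= /(Hinj _ _ (ltn_ord a) (ltn_ord b)) H; apply/val_inj.
have u0 : u = 0.
  by apply: (mds_zero HAcol f'inj) => k; rewrite -Hu /=; apply: Hz.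
move=> p; case: (ltnP p (r + e m'.-1)) => Hp; last exact: Y_outp.
by have := Hu (Ordinal Hp); rewrite u0 mul0mx mxE.
Qed.

Hypothesis Hmn : (m < n)%N.
Hypothesis HmK : (m' <= n - m)%N.
Hypothesis Hmono : forall l, (l.+1 < m')%N -> (e l <= e l.+1)%N.
Hypothesis HEr : (e m'.-1 <= r)%N.

Lemma mono l1 l2 : (l1 <= l2)%N -> (l2 < m')%N -> (e l1 <= e l2)%N.
Proof.
move=> H12; rewrite -(subnKC H12); elim: (l2 - l1)%N => [|d IH] H.
  by rewrite addn0.
apply: leq_trans (IH _) _; first lia.
rewrite addnS; apply: Hmono; lia.
Qed.

Lemma eE l : (l < m')%N -> (e l <= e m'.-1)%N.
Proof. by move=> H; apply: mono; lia. Qed.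

Definition VZ D := forall l t, (l < m')%N -> (t < e l)%N -> Y D (r + t) (n + l) = 0.

Lemma ext_row D l1 t : (l1 < m')%N -> (t < e l1)%N -> VZ D ->
  (forall q, (q < n - m - m' + l1)%N -> forall p, Y D p q = 0) ->
  forall q, Y D (r + t) q = 0.
Proof.
move=> Hl Ht HV HC.
apply: (RZ (f := fun k => if (k < n - m - m' + l1)%N then k else (n + (k - (n - m - m')))%N)).
- by move=> k Hk; case: ifP => H; lia.
- by move=> k1 k2 H1 H2; repeat (case: ifP => ?); lia.
move=> k Hk; case: ifP => H; first exact: HC.
apply: HV; first lia.
apply: leq_trans Ht _; apply: mono; lia.
Qed.

Lemma col_step D q : (q < n - m)%N ->
  (forall p, (p < r)%N -> data_pos n r m m' e p q -> Y D p q = 0) ->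
  ((n - m - m' <= q)%N -> forall t, (t < e (q - (n - m - m')))%N -> Y D (r + t) q = 0) ->
  forall p, Y D p q = 0.
Proof.
move=> Hq Hd Hx.
case: (ltnP q (n - m - m')) => Hb.
  apply: (CZ (g := id)) => //.
  - by move=> k Hk; lia.
  move=> k Hk; apply: Hd => //; rewrite /data_pos /in_T; lia.
set l := (q - (n - m - m'))%N in Hx.
have Hl : (e l <= e m'.-1)%N by apply: eE; rewrite /l; lia.
apply: (CZ (g := fun k => if (k < r - e l)%N then k else (k + e l)%N)).
- by move=> k Hk; case: ifP => H; lia.
- by move=> k1 k2 H1 H2; repeat (case: ifP => ?); lia.
move=> k Hk; case: ifP => H.
  apply: Hd => //; rewrite /data_pos /in_T -/l; lia.
have -> : (k + e l = r + (k + e l - r))%N by lia.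
apply: Hx => //; lia.
Qed.

Lemma virt_col D l : (l < m')%N -> VZ D ->
  (forall p, (p < r - e l)%N -> Y D p (n + l) = 0) ->
  forall p, Y D p (n + l) = 0.
Proof.
move=> Hl HV Hd.
have He : (e l <= e m'.-1)%N by apply: eE.
apply: (CZ (g := fun k => if (k < r - e l)%N then k else (k + e l)%N)).
- by move=> k Hk; case: ifP => H; lia.
- by move=> k1 k2 H1 H2; repeat (case: ifP => ?); lia.
move=> k Hk; case: ifP => H; first exact: Hd.
have -> : (k + e l = r + (k + e l - r))%N by lia.
apply: HV => //; lia.
Qed.

Lemma row_step D p : (p < r)%N -> VZ D ->
  (forall q, data_pos n r m m' e p q -> Y D p q = 0) ->
  (forall l, (l < m')%N -> (r - e l <= p)%N -> forall p', (p' < r - e l)%N -> Y D p' (n + l) = 0) ->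
  forall q, Y D p q = 0.
Proof.
move=> Hp HV Hd Hv.
apply: (RZ (f := fun k => if (k < n - m - m')%N then k else
   if (p < r - e (k - (n - m - m')))%N then k else (n + (k - (n - m - m')))%N)).
- by move=> k Hk; repeat (case: ifP => ?); lia.
- by move=> k1 k2 H1 H2; repeat (case: ifP => ?); lia.
move=> k Hk; case: ifP => H.
  by apply: Hd; rewrite /data_pos /in_T; lia.
case: ifP => H2.
  by apply: Hd; rewrite /data_pos /in_T; lia.
apply: virt_col => //; first lia.
by apply: Hv => //; lia.
Qed.

Lemma ColZ D J : (J <= n - m)%N -> VZ D ->
  (forall p q, (q < J)%N -> data_pos n r m m' e p q -> Y D p q = 0) ->
  forall q, (q < J)%N -> forall p, Y D p q = 0.
Proof.
move=> HJ HV Hd q; elim/ltn_ind: q => q IH Hq.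
apply: col_step; first lia.
  by move=> p Hp; apply: Hd.
move=> Hb t Ht.
apply: (ext_row (l1 := (q - (n - m - m'))%N)) => //; first lia.
move=> q' Hq'; apply: IH; lia.
Qed.

Lemma RowZ D I : (I <= r)%N -> VZ D ->
  (forall p q, (p < I)%N -> data_pos n r m m' e p q -> Y D p q = 0) ->
  forall p, (p < I)%N -> forall q, Y D p q = 0.
Proof.
move=> HI HV Hd p; elim/ltn_ind: p => p IH Hp.
apply: row_step => //; first lia.
  by move=> q; apply: Hd.
move=> l Hl H1 p' Hp'; apply: IH; lia.
Qed.

Hypothesis He0 : (0 < e 0)%N.

Definition phi D : 'M[F]_(r, n - m) := \matrix_(p, q)
  (if in_T n r m m' e p q then Y D (r + (r - 1 - p)) (n + (q - (n - m - m')))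
   else Y D p q).

Lemma phiB D1 D2 : phi (D1 - D2) = phi D1 - phi D2.
Proof. by apply/matrixP => p q; rewrite !mxE; case: ifP => _; exact: YB. Qed.

Lemma phi_VZ D : (forall (p : 'I_r) (q : 'I_(n - m)),
  in_T n r m m' e p q -> phi D p q = 0) -> VZ D.
Proof.
move=> H l t Hl Ht.
have Hel : (e l <= r)%N by apply: leq_trans (eE Hl) HEr.
have Hp : (r - 1 - t < r)%N by lia.
have Hq : (n - m - m' + l < n - m)%N by lia.
have Hq' : (n - m - m' + l - (n - m - m') = l)%N by lia.
have HT : in_T n r m m' e (r - 1 - t) (n - m - m' + l) by rewrite /in_T Hq'; lia.
have := H (Ordinal Hp) (Ordinal Hq); rewrite mxE /= HT Hq'.
have -> : (r + (r - 1 - (r - 1 - t)) = r + t)%N by lia.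
by apply.
Qed.

Lemma phi_inj : injective phi.
Proof.
move=> D1 D2 E; apply/eqP; rewrite -subr_eq0; apply/eqP.
set D := D1 - D2.
have H0 : phi D = 0 by rewrite phiB E subrr.
have HV : VZ D by apply: phi_VZ => p q _; rewrite H0 mxE.
have Hz := @ColZ D (n - m) (leqnn _) HV.
have Hz' : forall q, (q < n - m)%N -> forall p, Y D p q = 0.
  apply: Hz => p q Hq Hd.
  have Hp : (p < r)%N by move: Hd; rewrite /data_pos; lia.
  have := congr1 (fun M : 'M[F]_(r, n - m) => M (Ordinal Hp) (Ordinal Hq)) H0.
  rewrite /= !mxE ifF //; apply/negbTE; move: Hd; rewrite /data_pos; by case/and3P.
apply/matrixP => p q.
have := Hz' q (ltn_ord q) p.
rewrite /Y ltn_ord.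
change (mget (W D) p (lshift (m + m') q) = 0 -> D p q = (0 : 'M[F]_(r, n - m)) p q).
rewrite mgetE /W /Gr mul_mx_row mulmx1 row_mxEl => ->.
by rewrite mxE.
Qed.

Lemma exists_impulse i j : data_pos n r m m' e i j ->
  exists D, VZ D /\ (forall p q, data_pos n r m m' e p q ->
     Y D p q = if (p == i) && (q == j) then 1 else 0).
Proof.
move=> Hij.
pose T : 'M[F]_(r, n - m) :=
  \matrix_(p, q) (if ((p : nat) == i) && ((q : nat) == j) then 1 else 0).
have [g phiK gK] := injF_bij phi_inj.
exists (g T); split.
  apply: phi_VZ => p q HT; rewrite gK mxE.
  case: ifP => // /andP [/eqP Ep /eqP Eq].
  by move: Hij HT; rewrite /data_pos Ep Eq => /and3P [_ _ /negP].
move=> p q Hd.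
have Hp : (p < r)%N by move: Hd; rewrite /data_pos; lia.
have Hq : (q < n - m)%N by move: Hd; rewrite /data_pos; lia.
have := congr1 (fun M : 'M[F]_(r, n - m) => M (Ordinal Hp) (Ordinal Hq)) (gK T).
have HnT : ~~ in_T n r m m' e p q by case/and3P: Hd.
by rewrite /= !mxE (negbTE HnT) => ->.
Qed.

Lemma Y_inS D : VZ D -> in_S n r m m' e Arow Acol (Y D).
Proof.
move=> HV; exists (fun p l => Y D p (n + l)); split.
  move=> p Hp; have [u Hu] := Y_row D p; exists u.
  rewrite /sys_enc -[u in row_mx u _]mulmx1 -mul_mx_row -/Gr.
  apply/rowP => k; rewrite mxE -Hu.
  case: ifP => // Hk; congr (Y D p _); lia.
move=> l Hl t Ht.
have [v Hv] := Y_col D (n + l).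
have Er : \row_(k < r) Y D k (n + l) = v.
  apply/rowP => k; rewrite mxE.
  by have := Hv (lshift _ k); rewrite mul_mx_row mulmx1 row_mxEl => <-.
rewrite Er.
have := Hv (rshift r t); rewrite mul_mx_row mulmx1 row_mxEr => <-.
exact: (HV l t Hl Ht).
Qed.

Lemma claims D i j i0 j0 : VZ D ->
  (forall p q, data_pos n r m m' e p q ->
     Y D p q = if (p == i) && (q == j) then 1 else 0) ->
  data_pos n r m m' e i j -> parity_pos n r m m' e i0 j0 ->
  [/\ (i0 < i)%N -> Y D i0 j0 = 0,
      (j0 < j)%N -> Y D i0 j0 = 0,
      j <> j0 -> hgt n r m m' e j = hgt n r m m' e j0 -> Y D i0 j0 = 0
    & i <> i0 -> vcnt n r m m' e i = vcnt n r m m' e i0 -> Y D i0 j0 = 0].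
Proof.
move=> HV HD Hij Hpar.
have HD0 : forall p q, data_pos n r m m' e p q -> p <> i \/ q <> j -> Y D p q = 0.
  move=> p q Hd Hne; rewrite HD // ifF //; apply/negbTE/nandP.
  by case: Hne => H; [left|right]; apply/eqP.
have Hir : (i < r)%N by move: Hij; rewrite /data_pos; lia.
have HjK : (j < n - m)%N by move: Hij; rewrite /data_pos; lia.
have Hi0r : (i0 < r)%N by move: Hpar; rewrite /parity_pos; lia.
have Rows : forall p, (p < i)%N -> forall q, Y D p q = 0.
  apply: (RowZ (ltnW Hir) HV) => p q Hp Hd; apply: HD0 => //; left; lia.
have Cols : forall q, (q < j)%N -> forall p, Y D p q = 0.
  apply: (ColZ (ltnW HjK) HV) => p q Hq Hd; apply: HD0 => //; right; lia.
have C1 : (i0 < i)%N -> Y D i0 j0 = 0 by move=> H; apply: Rows.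
have C2 : (j0 < j)%N -> Y D i0 j0 = 0 by move=> H; apply: Cols.
split => //.
- move=> Hne Hh; case: (ltnP j0 j) => Hjj; first exact: C2.
  have Hlt : (j < j0)%N by lia.
  case: (ltnP j0 (n - m)) => Hj0K; last first.
    exfalso; move: Hh Hij; rewrite /hgt /data_pos /in_T.
    by repeat (case: ifP => ?); lia.
  have Hb0 : (n - m - m' <= j0)%N by move: Hpar; rewrite /parity_pos /in_T; lia.
  have He00 : (e 0 <= e (j0 - (n - m - m')))%N by apply: mono; lia.
  have Hbj : (n - m - m' <= j)%N.
    case: (ltnP j (n - m - m')) => // Hjb; exfalso.
    by move: Hh; rewrite /hgt; repeat (case: ifP => ?); lia.
  have Hee : e (j - (n - m - m')) = e (j0 - (n - m - m')).
    by move: Hh; rewrite /hgt; repeat (case: ifP => ?); lia.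
  apply: col_step => //.
    by move=> p Hp Hd; apply: HD0 => //; right; lia.
  move=> _ t Ht.
  apply: (ext_row (l1 := (j - (n - m - m'))%N)) => //; first lia.
    by rewrite Hee.
  by move=> q Hq; apply: Cols; lia.
- move=> Hne Hv; case: (ltnP i0 i) => Hii; first exact: C1.
  have Hlt : (i < i0)%N by lia.
  have Hpat : forall l, (l < m')%N -> (r - e l <= i0)%N -> (r - e l <= i)%N.
    move=> l Hl.
    set A := [set jj : 'I_n | (r - i <= hgt n r m m' e jj)%N].
    set B := [set jj : 'I_n | (r - i0 <= hgt n r m m' e jj)%N].
    have sub : A \subset B by apply/subsetP => x; rewrite !inE; lia.
    have cAB : #|A| = #|B| by exact: Hv.
    have EAB : A == B by rewrite eqEcard sub cAB leqnn.
    have Hx : (n - m - m' + l < n)%N by lia.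
    have Hh : hgt n r m m' e (n - m - m' + l) = e l.
      rewrite /hgt; case: ifP => ?; first lia.
      case: ifP => ?; last lia.
      congr e; lia.
    have := congr1 (fun S : {set 'I_n} => Ordinal Hx \in S) (eqP EAB).
    rewrite /= !inE Hh; lia.
  apply: row_step => //.
    by move=> q Hd; apply: HD0 => //; left; lia.
  move=> l Hl H1 p' Hp'; apply: Rows.
  have := Hpat l Hl H1; lia.
Qed.

End Stair.

Lemma sum_delta (F : fieldType) n r m m' (e : nat -> nat) (c : nat -> nat -> F) i j :
  data_pos n r m m' e i j ->
  (\sum_(i' < r) \sum_(j' < n | data_pos n r m m' e i' j')
      c i' j' * (if ((i' : nat) == i) && ((j' : nat) == j) then 1 else 0)) = c i j.
Proof.
move=> Hij.
have Hi : (i < r)%N by move: Hij; rewrite /data_pos; lia.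
have Hj : (j < n)%N by move: Hij; rewrite /data_pos; lia.
rewrite (bigD1 (Ordinal Hi)) //=.
rewrite [X in _ + X]big1 ?addr0; last first.
  move=> i' Hne; apply: big1 => j' _; rewrite ifF ?mulr0 //.
  apply/negbTE/nandP; left; apply: contra Hne => /eqP E; apply/eqP/val_inj.
  exact: E.
rewrite (bigD1 (Ordinal Hj)) //= !eqxx mulr1 big1 ?addr0 //.
move=> j' /andP [_ Hne]; rewrite /= ifF ?mulr0 //.
apply/negbTE; apply: contra Hne => /eqP E; apply/eqP/val_inj; exact: E.
Qed.

Theorem mainTheorem4 (w : nat) (F : finFieldType) (n r m m' : nat)
  (e : nat -> nat)
  (Arow : 'M[F]_(n - m, m + m')) (Acol : 'M[F]_(r, e m'.-1))
  (c : nat -> nat -> F) (i0 j0 : nat) :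
  #|F| = (2 ^ w)%N ->
  (1 <= m)%N -> (m < n)%N -> (1 <= m')%N -> (m' <= n - m)%N ->
  (0 < e 0)%N -> (forall l, (l.+1 < m')%N -> (e l <= e l.+1)%N) ->
  (e m'.-1 <= r)%N ->
  (n + m' <= 2 ^ w)%N -> (r + e m'.-1 <= 2 ^ w)%N ->
  is_sys_MDS Arow -> is_sys_MDS Acol ->
  parity_pos n r m m' e i0 j0 ->
  (* c gives the coefficients of X_{i0,j0} as a linear function of the data *)
  (forall X, in_S n r m m' e Arow Acol X ->
     X i0 j0 = (\sum_(i < r) \sum_(j < n | data_pos n r m m' e i j)
                  c i j * X i j)%R) ->
  forall i j, data_pos n r m m' e i j ->
    [/\ (c i j != 0)%R -> (i <= i0)%N /\ (j <= j0)%N,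
        j <> j0 -> hgt n r m m' e j = hgt n r m m' e j0 -> c i j = 0%R
      & i <> i0 -> vcnt n r m m' e i = vcnt n r m m' e i0 -> c i j = 0%R].
Proof.
move=> _ _ Hmn _ HmK He0 Hmono HEr _ _ HArow HAcol Hpar Hc i j Hij.
have [D [HV HD]] := exists_impulse HArow HAcol Hmn HmK Hmono HEr He0 Hij.
have Hcij : c i j = Y Arow Acol D i0 j0.
  rewrite (Hc _ (Y_inS Hmn HmK HEr He0 HV)) -(sum_delta c Hij).
  apply: eq_bigr => i' _; apply: eq_bigr => j' Hd'; by rewrite HD.
have [C1 C2 C3 C4] := claims HArow HAcol Hmn HmK Hmono HEr He0 HV HD Hij Hpar.
rewrite Hcij; split => //.
move=> Hne; split.
  by case: (leqP i i0) => // H; rewrite C1 ?eqxx in Hne.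
by case: (leqP j j0) => // H; rewrite C2 ?eqxx in Hne.
Qed.
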